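(* Let $G$ be a finite two-player zero-sum extensive form game with perfect recall, and run CFR or CFR$^+$ with alternating updates (Player 1 updated first) on $G$. Let $t\ge 0$, let $p$ be the player about to be updated at time $t$, let $\sigma^t_p$ be $p$'s current strategy, and let $\sigma_o$ be the opponent strategy used in $p$'s update values, i.e. $\sigma_o=\sigma^t_2$ if $p=1$ and $\sigma_o=\sigma^{t+1}_1$ if $p=2$. Then $$u_p^{(\sigma^{t+1}_p,\sigma_o)}\ge u_p^{(\sigma^t_p,\sigma_o)}.$$
   Context: Extensive form game: a finite tree of histories $h$ (sequences of actions from the root $\emptyset$), terminal histories $Z$, actions $A(h)$ at nonterminal $h$, an acting player $P(h)\in\{1,2,c\}$ where $c$ is chance acting with fixed probabilities, utilities $u_1(z)=-u_2(z)$ at terminals, and for each player a partition of that player's histories into information sets $I$ (all $h\in I$ share the same legal actions $A(I)$). Perfect recall: any two histories in one information set of player $p$ pass through the same sequence of player-$p$ information sets and player-$p$ actions. A strategy $\sigma_p$ gives a distribution $\boldsymbol{\sigma}_p(I)$ over $A(I)$ for each player-$p$ information set; $u^{\boldsymbol\sigma}_p$ is player $p$'s expected utility under profile $\boldsymbol\sigma$. For a profile $\boldsymbol{\sigma}$ and terminal $z$, $\pi^{\boldsymbol\sigma}_{-p}(z)$ is the product of the probabilities of all actions on the path to $z$ taken by chance and by $p$'s opponent; for $h\sqsubseteq z$, $\pi^{\boldsymbol\sigma}_p(z\mid h)$ is the product of the probabilities under $\sigma_p$ of player $p$'s actions on the path from $h$ to $z$. Counterfactual values: $v^{\boldsymbol\sigma}_p(h):=\sum_{z\in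 Z,\,h\sqsubseteq z}\pi^{\boldsymbol\sigma}_{-p}(z)\pi^{\boldsymbol\sigma}_p(z\mid h)u_p(z)$, and for an information set $I$ of player $p$, $v^{\boldsymbol\sigma}(I)_a:=\sum_{h\in I}v^{\boldsymbol\sigma}_p(ha)$, $a\in A(I)$. Let $x^+=\max(x,0)$ componentwise and $\boldsymbol{\sigma}_{\mathrm{rm}}(\boldsymbol{x}):=\boldsymbol{x}^+/(\boldsymbol{1}\cdot\boldsymbol{x}^+)$ if some $x_a>0$, else $\boldsymbol{1}/|A|$. CFR with alternating updates keeps for each information set $I$ a vector $\boldsymbol{r}^t(I)$ with $\boldsymbol{r}^0(I)=\boldsymbol 0$, plays $\boldsymbol\sigma^t(I)=\boldsymbol{\sigma}_{\mathrm{rm}}(\boldsymbol{r}^t(I))$, and updates $\boldsymbol{r}^{t+1}(I)=\boldsymbol{r}^t(I)+\boldsymbol{v}^t(I)-(\boldsymbol\sigma^t(I)\cdot\boldsymbol{v}^t(I))\boldsymbol 1$; CFR$^+$ instead keeps $\boldsymbol{q}^t(I)$ with $\boldsymbol{q}^0(I)=\boldsymbol 0$, $\boldsymbol\sigma^t(I)=\boldsymbol{\sigma}_{\mathrm{rm}}(\boldsymbol{q}^t(I))$, $\boldsymbol{q}^{t+1}(I)=(\boldsymbol{q}^t(I)+\boldsymbol{v}^t(I)-(\boldsymbol\sigma^t(I)\cdot\boldsymbol{v}^t(I))\boldsymbol 1)^+$. In both, $\boldsymbol{v}^t(I)=\boldsymbol{v}^{(\sigma^t_1,\sigma^t_2)}(I)$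 if $I$ belongs to Player 1 and $\boldsymbol{v}^t(I)=\boldsymbol{v}^{(\sigma^{t+1}_1,\sigma^t_2)}(I)$ if $I$ belongs to Player 2. *)

(* Defs.v *)
(* Extensive-form games as finite trees; histories are
   paths from the root given as sequences of action indices. *)
From HB Require Import structures.
From mathcomp Require Import all_boot all_order all_algebra.
Set Implicit Arguments. Unset Strict Implicit. Unset Printing Implicit Defensive.
Import Order.TTheory GRing.Theory Num.Theory.
Local Open Scope ring_scope.

Inductive player := P1 | P2.

Definition peq (p q : player) : bool :=
  match p, q with P1, P1 | P2, P2 => true | _, _ => false end.

(* A game tree.  [Leaf u]: terminal with u_1 = u (and u_2 = -u).
   [Chance n pr kids]: chance node with actions 0..n-1, action a taken with
   probability pr a, leading to kids a.
   [Node q I n kids]: player q acts, history lies in q's information set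
   labelled I, actions 0..n-1. *)
Inductive tree (R : Type) : Type :=
| Leaf (u : R)
| Chance (n : nat) (pr : nat -> R) (kids : nat -> tree R)
| Node (q : player) (I : nat) (n : nat) (kids : nat -> tree R).
Arguments Leaf {R}.
Arguments Chance {R}.
Arguments Node {R}.

Section Games.
Variable R : realFieldType.

(* a strategy of a player: information set label -> action -> probability *)
Definition strat := nat -> nat -> R.

Fixpoint node_at (t : tree R) (h : seq nat) : option (tree R) :=
  match h with
  | [::] => Some t
  | a :: h' =>
    match t with
    | Leaf _ => None
    | Chance n _ k => if (a < n)%N then node_at (k a) h' else None
    | Node _ _ n k => if (a < n)%N then node_at (k a) h' else None
    end
  end.

Fixpoint histories (t : tree R) : seq (seq nat) :=
  match t with
  | Leaf _ => [:: [::]]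
  | Chance n _ k =>
      [::] :: flatten [seq [seq a :: h | h <- histories (k a)] | a <- iota 0 n]
  | Node _ _ n k =>
      [::] :: flatten [seq [seq a :: h | h <- histories (k a)] | a <- iota 0 n]
  end.

Definition is_terminal (t : tree R) (h : seq nat) : bool :=
  if node_at t h is Some (Leaf _) then true else false.

Definition terminals (t : tree R) : seq (seq nat) :=
  [seq z <- histories t | is_terminal t z].

Definition util (t : tree R) (p : player) (z : seq nat) : R :=
  let u1 := if node_at t z is Some (Leaf u) then u else 0 in
  if p is P1 then u1 else - u1.

Definition in_infoset (t : tree R) (p : player) (I : nat) (h : seq nat) : bool :=
  if node_at t h is Some (Node q J _ _) then peq q p && (J == I) else false.

Fixpoint path_prob (c b1 b2 : bool) (s1 s2 : strat) (t : tree R) (z : seq nat) : R :=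
  match z with
  | [::] => 1
  | a :: z' =>
    match t with
    | Leaf _ => 1
    | Chance _ pr k => (if c then pr a else 1) * path_prob c b1 b2 s1 s2 (k a) z'
    | Node q J _ k =>
        (if q is P1 then (if b1 then s1 J a else 1) else (if b2 then s2 J a else 1))
        * path_prob c b1 b2 s1 s2 (k a) z'
    end
  end.

(* pi^sigma_{-p}(z) : chance and opponent actions on the path to z *)
Definition pi_opp (t : tree R) (p : player) (s1 s2 : strat) (z : seq nat) : R :=
  path_prob true (peq p P2) (peq p P1) s1 s2 t z.

(* pi^sigma_p(z | h) : p's actions on the path from h to z (h a prefix of z) *)
Definition pi_own_from (t : tree R) (p : player) (s1 s2 : strat) (h z : seq nat) : R :=
  if node_at t h is Some t' then
    path_prob false (peq p P1) (peq p P2) s1 s2 t' (drop (size h) z)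
  else 0.

Definition prefix (h z : seq nat) : bool := h == take (size h) z.

Definition cf_value (t : tree R) (p : player) (s1 s2 : strat) (h : seq nat) : R :=
  \sum_(z <- terminals t | prefix h z)
     pi_opp t p s1 s2 z * pi_own_from t p s1 s2 h z * util t p z.

Definition cfv (t : tree R) (p : player) (s1 s2 : strat) (I a : nat) : R :=
  \sum_(h <- histories t | in_infoset t p I h) cf_value t p s1 s2 (rcons h a).

Definition exp_util (t : tree R) (p : player) (s1 s2 : strat) : R :=
  \sum_(z <- terminals t) path_prob true true true s1 s2 t z * util t p z.

(* nA p I = |A(I)|: all histories of an information set have the same
   number of actions; nonterminal histories have at least one action;
   chance probabilities form a distribution. *)
Definition well_formed (t : tree R) (nA : player -> nat -> nat) : Prop :=
  (forall h q I n k, node_at t h = Some (Node q I n k) -> n = nA q I /\ (0 < n)%N) /\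
  (forall h n pr k, node_at t h = Some (Chance n pr k) ->
      (0 < n)%N /\ (forall a, (a < n)%N -> 0 <= pr a) /\ \sum_(a < n) pr a = 1).

Fixpoint own_seq (p : player) (t : tree R) (z : seq nat) : seq (nat * nat) :=
  match z with
  | [::] => [::]
  | a :: z' =>
    match t with
    | Leaf _ => [::]
    | Chance _ _ k => own_seq p (k a) z'
    | Node q J _ k => (if peq q p then [:: (J, a)] else [::]) ++ own_seq p (k a) z'
    end
  end.

Definition perfect_recall (t : tree R) : Prop :=
  forall p I h h', in_infoset t p I h -> in_infoset t p I h' ->
    own_seq p t h = own_seq p t h'.

Definition pos (x : R) : R := Num.max x 0.

Definition sigma_rm (n : nat) (x : nat -> R) : nat -> R :=
  fun a => if [exists b : 'I_n, 0 < x b]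
           then pos (x a) / \sum_(b < n) pos (x b)
           else n%:R^-1.

(* r + v - (sigma . v) 1, followed by (.)^+ when plus = true (CFR+) *)
Definition regret_update (plus : bool) (n : nat) (r sg v : nat -> R) : nat -> R :=
  fun a => let x := r a + v a - \sum_(b < n) sg b * v b in
           if plus then pos x else x.

Definition strat_of (nA : player -> nat -> nat) (r : player -> nat -> nat -> R)
  (p : player) : strat := fun I => sigma_rm (nA p I) (r p I).

(* one iteration: update player 1 with (s1^t, s2^t), then player 2 with
   (s1^{t+1}, s2^t) *)
Definition cfr_step (plus : bool) (t : tree R) (nA : player -> nat -> nat)
  (r : player -> nat -> nat -> R) : player -> nat -> nat -> R :=
  let s1 := strat_of nA r P1 in
  let s2 := strat_of nA r P2 in
  let r1 := fun I => regret_update plus (nA P1 I) (r P1 I) (s1 I) (cfv t P1 s1 s2 I) in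
  let s1' : strat := fun I => sigma_rm (nA P1 I) (r1 I) in
  let r2 := fun I => regret_update plus (nA P2 I) (r P2 I) (s2 I) (cfv t P2 s1' s2 I) in
  fun p => if p is P1 then r1 else r2.

Definition regrets (plus : bool) (t : tree R) (nA : player -> nat -> nat) (T : nat) :
  player -> nat -> nat -> R :=
  iter T (cfr_step plus t nA) (fun _ _ _ => 0).

Definition cfr_strat (plus : bool) (t : tree R) (nA : player -> nat -> nat) (T : nat)
  (p : player) : strat := strat_of nA (regrets plus t nA T) p.

End Games.

(* Main.v *)
Require Import Defs.
From mathcomp Require Import all_boot all_order all_algebra.
From mathcomp Require Import ring lra.
Set Implicit Arguments. Unset Strict Implicit. Unset Printing Implicit Defensive.
Import Order.TTheory GRing.Theory Num.Theory.
Local Open Scope ring_scope.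

Lemma pos_ge0 (R : realFieldType) (x : R) : 0 <= pos x.
Proof. rewrite /pos maxEle; case: ifP => // /negbT; rewrite -ltNge => /ltW. done. Qed.

Lemma pos_gt0 (R : realFieldType) (x : R) : (0 < pos x) = (0 < x).
Proof. rewrite /pos maxEle; case: ifP => [h|/negbT]; first by rewrite ltxx; apply/esym/negbTE; rewrite -leNgt. by rewrite -ltNge => ->. Qed.

Lemma pos_ge (R : realFieldType) (x : R) : x <= pos x.
Proof. rewrite /pos maxEle; case: ifP => //. Qed.

Lemma pos_pos (R : realFieldType) (x : R) : pos (pos x) = pos x.
Proof. rewrite {1}/pos maxEle; case: ifP => // h; apply/eqP; rewrite eq_le h pos_ge0. done. Qed.

Lemma pos_mul (R : realFieldType) (x : R) : pos x * x = pos x * pos x.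
Proof. rewrite /pos maxEle; case: ifP => _; by rewrite ?mul0r. Qed.

Lemma pos_le0 (R : realFieldType) (x : R) : x <= 0 -> pos x = 0.
Proof. by move=> h; rewrite /pos maxEle h. Qed.

Lemma sigma_rm_pos (R : realFieldType) n (y : nat -> R) a :
  sigma_rm n (fun b => pos (y b)) a = sigma_rm n y a.
Proof.
rewrite /sigma_rm.
have -> : [exists b : 'I_n, 0 < pos (y b)] = [exists b : 'I_n, 0 < y b].
  by apply: eq_existsb => b; rewrite pos_gt0.
case: ifP => // _; rewrite pos_pos; congr (_ / _).
by apply: eq_bigr => b _; rewrite pos_pos.
Qed.

Lemma rm_improve (R : realFieldType) plus n (r v : nat -> R) :
  0 <= \sum_(a < n) (sigma_rm n (regret_update plus n r (sigma_rm n r) v) a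
                      - sigma_rm n r a) * v a.
Proof.
set s := sigma_rm n r.
set S := \sum_(b < n) s b * v b.
pose y a := r a + v a - S.
have Hs' : forall a, sigma_rm n (regret_update plus n r s v) a = sigma_rm n y a.
  move=> a; rewrite /regret_update; case: plus; last by [].
  exact: sigma_rm_pos.
under eq_bigr do rewrite Hs'.
have Hr0 : \sum_(a < n) pos (r a) * (v a - S) = 0.
  case Er: [exists b : 'I_n, 0 < r b].
  - set Rr := \sum_(b < n) pos (r b).
    have Rr0 : 0 < Rr.
      case/existsP: Er => b rb.
      apply: (lt_le_trans _ (_ : pos (r b) <= Rr)); first by rewrite pos_gt0.
      rewrite /Rr (bigD1 b) //= lerDl; apply: sumr_ge0 => i _; exact: pos_ge0.
    have -> : S = (\sum_(b < n) pos (r b) * v b) / Rr.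
      rewrite /S /s /sigma_rm Er mulr_suml; apply: eq_bigr => b _; by rewrite mulrAC.
    under eq_bigr do rewrite mulrBr.
    rewrite sumrB -mulr_suml -/Rr mulrCA mulfV ?mulr1 ?subrr //.
    by rewrite gt_eqF.
  - apply: big1 => a _.
    move/negbT: Er; rewrite negb_exists => /forallP /(_ a).
    by rewrite -leNgt => /pos_le0 ->; rewrite mul0r.
have HB : \sum_(a < n) pos (r a) * y a = \sum_(a < n) pos (r a) * pos (r a).
  transitivity (\sum_(a < n) (pos (r a) * pos (r a) + pos (r a) * (v a - S))).
    by apply: eq_bigr => a _; rewrite -pos_mul /y; ring.
  by rewrite big_split /= Hr0 addr0.
case Ey: [exists b : 'I_n, 0 < y b].
- set Y := \sum_(b < n) pos (y b).
  have Y0 : 0 < Y.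
    case/existsP: Ey => b rb.
    apply: (lt_le_trans _ (_ : pos (y b) <= Y)); first by rewrite pos_gt0.
    rewrite /Y (bigD1 b) //= lerDl; apply: sumr_ge0 => i _; exact: pos_ge0.
  have -> : \sum_(a < n) (sigma_rm n y a - s a) * v a
            = Y^-1 * \sum_(a < n) pos (y a) * (v a - S).
    under eq_bigr do rewrite mulrBl.
    rewrite sumrB -/S.
    under [in RHS]eq_bigr do rewrite mulrBr.
    rewrite sumrB -mulr_suml mulrBr mulrA mulVf ?gt_eqF // mul1r mulr_sumr.
    congr (_ - _); apply: eq_bigr => a _; rewrite /sigma_rm Ey -/Y; ring.
  apply: mulr_ge0; first by rewrite invr_ge0 ltW.
  set A := \sum_(a < n) pos (y a) * pos (y a).
  set C := \sum_(a < n) pos (y a) * pos (r a).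
  set B := \sum_(a < n) pos (r a) * pos (r a).
  have E1 : \sum_(a < n) pos (y a) * (v a - S) = A - \sum_(a < n) pos (y a) * r a.
    rewrite /A -sumrB; apply: eq_bigr => a _; rewrite -pos_mul /y; ring.
  have E2 : \sum_(a < n) pos (y a) * r a <= C.
    apply: ler_sum => a _; apply: ler_wpM2l; [exact: pos_ge0 | exact: pos_ge].
  have E3 : B <= C.
    rewrite /B -HB /C; apply: ler_sum => a _; rewrite [X in _ <= X]mulrC.
    apply: ler_wpM2l; [exact: pos_ge0 | exact: pos_ge].
  have E4 : 0 <= A - 2 * C + B.
    have -> : A - 2 * C + B = \sum_(a < n) (pos (y a) - pos (r a)) ^+ 2.
      rewrite /A /C /B mulr_sumr -sumrB -big_split; apply: eq_bigr => a _ /=; ring.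
    apply: sumr_ge0 => a _; exact: sqr_ge0.
  rewrite E1; lra.
- have Er : [exists b : 'I_n, 0 < r b] = false.
    apply/negbTE/negP => /existsP [b rb].
    have H1 : pos (r b) * pos (r b) <= \sum_(a < n) pos (r a) * pos (r a).
      rewrite (bigD1 b) //= lerDl; apply: sumr_ge0 => i _.
      by apply: mulr_ge0; exact: pos_ge0.
    have H2 : 0 < pos (r b) * pos (r b) by apply: mulr_gt0; rewrite pos_gt0.
    have H3 : \sum_(a < n) pos (r a) * y a <= 0.
      apply: (le_trans (y := \sum_(a < n) (0 : R))); last by rewrite big1.
      apply: ler_sum => a _; apply: mulr_ge0_le0; first exact: pos_ge0.
      move/negbT: Ey; rewrite negb_exists => /forallP /(_ a).
      by rewrite -leNgt.
    lra.
  rewrite big1 // => a _.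
  by rewrite /s /sigma_rm Er Ey subrr mul0r.
Qed.

Definition sp (R : realFieldType) (q : player) (s1 s2 : strat R) : strat R :=
  if q is P1 then s1 else s2.

Fixpoint EU (R : realFieldType) (p : player) (s1 s2 : strat R) (t : tree R) : R :=
  match t with
  | Leaf u => if p is P1 then u else - u
  | Chance n pr k => \sum_(a <- iota 0 n) pr a * EU p s1 s2 (k a)
  | Node q J n k => \sum_(a <- iota 0 n) sp q s1 s2 J a * EU p s1 s2 (k a)
  end.

Definition kids (R : realFieldType) (t : tree R) : option (nat * (nat -> tree R)) :=
  match t with Leaf _ => None | Chance n _ k => Some (n, k) | Node _ _ n k => Some (n, k) end.

Lemma node_at_cons (R : realFieldType) (t : tree R) n k a z :
  kids t = Some (n, k) -> node_at t (a :: z) = if (a < n)%N then node_at (k a) z else None.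
Proof. by case: t => //= [? ? ?|? ? ? ?] [<- <-]. Qed.

Lemma path_prob_nil (R : realFieldType) (t : tree R) c b1 b2 s1 s2 :
  path_prob c b1 b2 s1 s2 t [::] = 1.
Proof. by case: t. Qed.

Lemma node_at_nil (R : realFieldType) (t : tree R) : node_at t [::] = Some t.
Proof. by case: t. Qed.

Lemma own_seq_nil (R : realFieldType) p (t : tree R) : own_seq p t [::] = [::].
Proof. by case: t. Qed.

Lemma path_prob_cons (R : realFieldType) (t : tree R) n k c b1 b2 s1 s2 a z :
  kids t = Some (n, k) ->
  path_prob c b1 b2 s1 s2 t (a :: z) =
  path_prob c b1 b2 s1 s2 t [:: a] * path_prob c b1 b2 s1 s2 (k a) z.
Proof. by case: t => //= [? ? ?|? ? ? ?] [_ <-]; rewrite path_prob_nil mulr1. Qed.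

Lemma hist_kids (R : realFieldType) (t : tree R) n k :
  kids t = Some (n, k) ->
  histories t = [::] :: flatten [seq [seq a :: h | h <- histories (k a)] | a <- iota 0 n].
Proof. by case: t => //= [? ? ?|? ? ? ?] [<- <-]. Qed.

Lemma term_kids (R : realFieldType) (t : tree R) n k :
  kids t = Some (n, k) ->
  terminals t = flatten [seq [seq a :: h | h <- terminals (k a)] | a <- iota 0 n].
Proof.
move=> Hk; rewrite /terminals (hist_kids Hk) /=.
have -> : is_terminal t [::] = false by case: t Hk.
rewrite filter_flatten -map_comp; congr flatten; apply/eq_in_map => a; rewrite mem_iota add0n => /andP [_ ha] /=.
rewrite filter_map; congr map; apply: eq_filter => z /=.
by rewrite /is_terminal (node_at_cons _ _ Hk) ha.
Qed.

Lemma sum_terms (R : realFieldType) (t : tree R) n k (F : seq nat -> R) :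
  kids t = Some (n, k) ->
  \sum_(z <- terminals t) F z = \sum_(a <- iota 0 n) \sum_(z <- terminals (k a)) F (a :: z).
Proof.
move=> Hk; rewrite (term_kids Hk) big_flatten big_map; apply: eq_bigr => a _.
by rewrite big_map.
Qed.

Lemma sum_hists (R : realFieldType) (t : tree R) n k (F : seq nat -> R) :
  kids t = Some (n, k) ->
  \sum_(h <- histories t) F h =
  F [::] + \sum_(a <- iota 0 n) \sum_(h <- histories (k a)) F (a :: h).
Proof.
move=> Hk; rewrite (hist_kids Hk) big_cons big_flatten big_map; congr (_ + _).
by apply: eq_bigr => a _; rewrite big_map.
Qed.

Lemma util_cons (R : realFieldType) (t : tree R) n k p a z :
  kids t = Some (n, k) -> (a < n)%N -> util t p (a :: z) = util (k a) p z.
Proof. by move=> Hk ha; rewrite /util (node_at_cons _ _ Hk) ha. Qed.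

Lemma EU_sum (R : realFieldType) p (s1 s2 : strat R) (t : tree R) :
  \sum_(z <- terminals t) path_prob true true true s1 s2 t z * util t p z = EU p s1 s2 t.
Proof.
elim: t => [u|n pr k IH|q J n k IH].
- by rewrite /terminals /= big_seq1 mul1r /util /=; case: p.
- rewrite (sum_terms _ (erefl : kids (Chance n pr k) = Some (n, k))) /=.
  apply: eq_big_seq => a; rewrite mem_iota add0n => /andP [_ ha].
  rewrite -IH mulr_sumr; apply: eq_bigr => z _.
  by rewrite (util_cons _ _ (erefl : kids (Chance n pr k) = Some (n, k))) // mulrA.
- rewrite (sum_terms _ (erefl : kids (Node q J n k) = Some (n, k))) /=.
  apply: eq_big_seq => a; rewrite mem_iota add0n => /andP [_ ha].
  rewrite -IH mulr_sumr; apply: eq_bigr => z _.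
  rewrite (util_cons _ _ (erefl : kids (Node q J n k) = Some (n, k))) // mulrA.
  by case: q.
Qed.

Lemma exp_util_EU (R : realFieldType) (t : tree R) p s1 s2 :
  exp_util t p s1 s2 = EU p s1 s2 t.
Proof. exact: EU_sum. Qed.

Lemma path_prob_split (R : realFieldType) c b1 b2 (s1 s2 : strat R) (t : tree R) z :
  path_prob c b1 b2 s1 s2 t z * path_prob (~~ c) (~~ b1) (~~ b2) s1 s2 t z =
  path_prob true true true s1 s2 t z.
Proof.
elim: z t => [|a z IH] t; first by rewrite !path_prob_nil mulr1.
case: t => [u|n pr k|q J n k] /=; first by rewrite mulr1.
- by rewrite -IH; clear IH; case: c => /=; ring.
- by rewrite -IH; clear IH; case: q; case: b1; case: b2 => /=; ring.
Qed.

Lemma opp_own (R : realFieldType) (t : tree R) p s1 s2 z :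
  Defs.pi_opp t p s1 s2 z * path_prob false (peq p P1) (peq p P2) s1 s2 t z =
  path_prob true true true s1 s2 t z.
Proof. by rewrite /Defs.pi_opp; case: p; exact: path_prob_split. Qed.

Lemma own_prod (R : realFieldType) (t : tree R) p s1 s2 z :
  path_prob false (peq p P1) (peq p P2) s1 s2 t z =
  \prod_(x <- own_seq p t z) sp p s1 s2 x.1 x.2.
Proof.
elim: z t => [|a z IH] t; first by rewrite path_prob_nil own_seq_nil big_nil.
case: t => [u|n pr k|q J n k] /=; first by rewrite big_nil.
- by rewrite mul1r IH.
- by rewrite IH; clear IH; case: q; case: p => /=; rewrite ?mul1r ?big_cons.
Qed.

Lemma pi_opp_indep (R : realFieldType) (t : tree R) p (s1 s2 s1' s2' : strat R) z :
  (forall q, peq q p = false -> sp q s1' s2' = sp q s1 s2) ->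
  Defs.pi_opp t p s1' s2' z = Defs.pi_opp t p s1 s2 z.
Proof.
rewrite /Defs.pi_opp; case: p => H; [move: (H P2 erefl) => /= -> | move: (H P1 erefl) => /= ->];
  elim: z t => [|a z IH] t; rewrite ?path_prob_nil //;
  case: t => [u|n pr k|q J n k] //=; rewrite IH //; by case: q.
Qed.

Lemma node_at_cat (R : realFieldType) (t : tree R) h z :
  node_at t (h ++ z) = if node_at t h is Some t' then node_at t' z else None.
Proof.
elim: h t => [|a h IH] t; first by rewrite node_at_nil.
case: t => [u|n pr k|q J n k] //=; case: (a < n)%N => //.
Qed.

Lemma path_prob_cat (R : realFieldType) (t t' : tree R) h z c b1 b2 s1 s2 :
  node_at t h = Some t' ->
  path_prob c b1 b2 s1 s2 t (h ++ z) = path_prob c b1 b2 s1 s2 t h * path_prob c b1 b2 s1 s2 t' z.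
Proof.
elim: h t => [|a h IH] t; first by rewrite node_at_nil => -[<-]; rewrite path_prob_nil mul1r.
by case: t => [u|n pr k|q J n k] //=; case: (a < n)%N => // /IH ->; rewrite mulrA.
Qed.

Lemma pi_opp_nil (R : realFieldType) (t : tree R) p s1 s2 : Defs.pi_opp t p s1 s2 [::] = 1.
Proof. exact: path_prob_nil. Qed.

Lemma cf_value_cons (R : realFieldType) (t : tree R) n k p s1 s2 a h :
  kids t = Some (n, k) -> (a < n)%N ->
  cf_value t p s1 s2 (a :: h) = Defs.pi_opp t p s1 s2 [:: a] * cf_value (k a) p s1 s2 h.
Proof.
move=> Hk ha; rewrite /cf_value big_mkcond (sum_terms _ Hk).
rewrite (bigD1_seq a) ?iota_uniq ?mem_iota ?add0n ?ha //=.
rewrite [X in _ + X]big1 ?addr0; last first.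
  move=> b hb; apply: big1 => z _.
  by rewrite /Defs.prefix /= eqseq_cons eq_sym (negbTE hb).
rewrite [in RHS]big_mkcond mulr_sumr; apply: eq_bigr => z _.
rewrite /Defs.prefix /= eqseq_cons eqxx /=.
case: ifP => _; last by rewrite mulr0.
rewrite /Defs.pi_opp (path_prob_cons _ _ _ _ _ _ _ Hk) (util_cons _ _ Hk ha).
rewrite /pi_own_from (node_at_cons _ _ Hk) ha /=.
by rewrite !mulrA.
Qed.

Lemma cf_value_node (R : realFieldType) (t' : tree R) p s1 s2 h (t : tree R) :
  node_at t h = Some t' -> cf_value t p s1 s2 h = Defs.pi_opp t p s1 s2 h * EU p s1 s2 t'.
Proof.
elim: h t => [|a h IH] t.
  rewrite node_at_nil => -[<-]; rewrite pi_opp_nil mul1r -(EU_sum p s1 s2 t) /cf_value.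
  rewrite (@eq_bigl _ _ _ _ _ _ xpredT); last by move=> z; rewrite /Defs.prefix take0.
  apply: eq_bigr => z _; rewrite /pi_own_from node_at_nil drop0.
  by rewrite (opp_own t p s1 s2 z).
move=> E; case Hk: (kids t) => [[n k]|]; last by case: t Hk E.
move: E; rewrite (node_at_cons _ _ Hk); case ha: (a < n)%N => // E.
rewrite (cf_value_cons _ _ _ _ Hk ha) (IH _ E) /Defs.pi_opp [in RHS](path_prob_cons _ _ _ _ _ _ _ Hk).
by rewrite mulrA.
Qed.

Lemma cf_rcons (R : realFieldType) (t : tree R) p s1 s2 h q J n k a :
  node_at t h = Some (Node q J n k) -> peq q p -> (a < n)%N ->
  cf_value t p s1 s2 (rcons h a) = Defs.pi_opp t p s1 s2 h * EU p s1 s2 (k a).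
Proof.
move=> E Hq ha; rewrite -cats1 (@cf_value_node _ (k a)); last first.
  by rewrite node_at_cat E /= ha node_at_nil.
rewrite /Defs.pi_opp (path_prob_cat _ _ _ _ _ _ E) /= path_prob_nil.
by case: q p Hq E => [] [] //= _ _; rewrite !mulr1.
Qed.

Definition pdterm (R : realFieldType) p (s1 s2 s1' s2' : strat R) (t : tree R) h : R :=
  match node_at t h with
  | Some (Node q J n k) =>
      if peq q p then path_prob true true true s1' s2' t h *
         \sum_(a <- iota 0 n) (sp p s1' s2' J a - sp p s1 s2 J a) * EU p s1 s2 (k a)
      else 0
  | _ => 0
  end.

Lemma pdterm_cons (R : realFieldType) p (s1 s2 s1' s2' : strat R) (t : tree R) n k a h :
  kids t = Some (n, k) -> (a < n)%N ->
  pdterm p s1 s2 s1' s2' t (a :: h) =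
  path_prob true true true s1' s2' t [:: a] * pdterm p s1 s2 s1' s2' (k a) h.
Proof.
move=> Hk ha; rewrite /pdterm (node_at_cons _ _ Hk) ha (path_prob_cons _ _ _ _ _ _ _ Hk).
case: (node_at (k a) h) => [[u|n' pr k'|q J n' k']|]; rewrite ?mulr0 //.
by case: (peq q p); rewrite ?mulr0 // mulrA.
Qed.

Lemma pp_node_all (R : realFieldType) q J n k a (s1 s2 : strat R) :
  path_prob true true true s1 s2 (Node q J n k) [:: a] = sp q s1 s2 J a.
Proof. by case: q; rewrite /= path_prob_nil mulr1. Qed.

Lemma PD (R : realFieldType) p (s1 s2 s1' s2' : strat R) (t : tree R) :
  (forall q, peq q p = false -> sp q s1' s2' = sp q s1 s2) ->
  EU p s1' s2' t - EU p s1 s2 t = \sum_(h <- histories t) pdterm p s1 s2 s1' s2' t h.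
Proof.
move=> Hopp; elim: t => [u|n pr k IH|q J n k IH].
- by rewrite /= big_seq1 /pdterm /= subrr.
- have Hk : kids (Chance n pr k) = Some (n, k) by [].
  rewrite (sum_hists _ Hk).
  have -> : pdterm p s1 s2 s1' s2' (Chance n pr k) [::] = 0 by [].
  rewrite add0r /= -sumrB; apply: eq_big_seq => a; rewrite mem_iota add0n => /andP [_ ha].
  rewrite -mulrBr IH mulr_sumr; apply: eq_bigr => h _.
  by rewrite (@pdterm_cons _ p s1 s2 s1' s2' _ n k a h Hk ha) /= path_prob_nil mulr1.
- have Hk : kids (Node q J n k) = Some (n, k) by [].
  rewrite (sum_hists _ Hk).
  case Hq: (peq q p).
  + have Eq : q = p by case: q p Hq {Hopp IH Hk} => [] [].
    subst q.
    have -> : pdterm p s1 s2 s1' s2' (Node p J n k) [::] =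
      \sum_(a <- iota 0 n) (sp p s1' s2' J a - sp p s1 s2 J a) * EU p s1 s2 (k a).
      by rewrite /pdterm /= Hq ?path_prob_nil mul1r.
    rewrite /= -sumrB -big_split /=; apply: eq_big_seq => a; rewrite mem_iota add0n => /andP [_ ha].
    under eq_bigr => h _ do rewrite (@pdterm_cons _ p s1 s2 s1' s2' _ n k a h Hk ha).
    rewrite -mulr_sumr -IH pp_node_all; ring.
  + have -> : pdterm p s1 s2 s1' s2' (Node q J n k) [::] = 0 by rewrite /pdterm /= Hq.
    rewrite add0r /= -sumrB; apply: eq_big_seq => a; rewrite mem_iota add0n => /andP [_ ha].
    rewrite (Hopp q Hq) -mulrBr IH mulr_sumr; apply: eq_bigr => h _.
    by rewrite (@pdterm_cons _ p s1 s2 s1' s2' _ n k a h Hk ha) pp_node_all (Hopp q Hq).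
Qed.

Lemma sum_iota_ord (R : realFieldType) n (F : nat -> R) :
  \sum_(a <- iota 0 n) F a = \sum_(a < n) F a.
Proof. by rewrite -(big_mkord xpredT) /index_iota subn0. Qed.

Lemma improve_general (R : realFieldType) (t : tree R) nA p (s1 s2 s1' s2' : strat R) :
  well_formed t nA -> perfect_recall t ->
  (forall q, peq q p = false -> sp q s1' s2' = sp q s1 s2) ->
  (forall J a, 0 <= sp p s1' s2' J a) ->
  (forall I, 0 <= \sum_(a < nA p I) (sp p s1' s2' I a - sp p s1 s2 I a) * cfv t p s1 s2 I a) ->
  EU p s1 s2 t <= EU p s1' s2' t.
Proof.
move=> HG Hpr Hopp Hnn Hloc.
rewrite -subr_ge0 (@PD _ p s1 s2 s1' s2' t Hopp).
pose label h := if node_at t h is Some (Node _ J _ _) then J else 0%N.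
pose L := undup [seq label h | h <- histories t].
pose c h := \prod_(x <- own_seq p t h) sp p s1' s2' x.1 x.2.
pose X I h := \sum_(a <- iota 0 (nA p I))
   (sp p s1' s2' I a - sp p s1 s2 I a) * cf_value t p s1 s2 (rcons h a).
have step1 : \sum_(h <- histories t) pdterm p s1 s2 s1' s2' t h =
   \sum_(h <- histories t) \sum_(I <- L) (if in_infoset t p I h then c h * X I h else 0).
  apply: eq_big_seq => h hin.
  rewrite /pdterm /in_infoset.
  case E: (node_at t h) => [[u|n0 pr k|q J n k]|]; try by rewrite big1.
  case Hq: (peq q p); last by rewrite big1.
  rewrite [in RHS](bigD1_seq J) ?undup_uniq //=; last first.
    by rewrite /L mem_undup; apply/mapP; exists h => //; rewrite /label E.
  rewrite eqxx [X in _ = _ + X]big1 ?addr0; last by move=> I hI; rewrite eq_sym (negbTE hI).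
  have [Hn _] := HG.1 _ _ _ _ _ E.
  have Eq : q = p by clear -Hq; destruct q, p.
  subst q n.
  rewrite -(opp_own t p s1' s2' h) own_prod (@pi_opp_indep _ t p s1 s2 s1' s2' h Hopp).
  rewrite /c /X !mulr_sumr; apply: eq_big_seq => a; rewrite mem_iota add0n => /andP [_ ha].
  rewrite (@cf_rcons _ t p s1 s2 h p J (nA p J) k a E Hq ha); ring.
rewrite step1 exchange_big /=; apply: sumr_ge0 => I _; rewrite -big_mkcond /=.
case Hh: (has (in_infoset t p I) (histories t)); last first.
  rewrite big_seq_cond big1 // => h /andP [hin Hin].
  by move/hasPn: (negbT Hh) => /(_ h hin); rewrite Hin.
move/hasP: Hh => [h0 _ Hh0].
rewrite (eq_bigr (fun h => c h0 * X I h)); last first.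
  by move=> h Hin; rewrite /c (Hpr p I h h0 Hin Hh0).
rewrite -mulr_sumr; apply: mulr_ge0.
  by rewrite /c; apply: prodr_ge0 => x _; exact: Hnn.
rewrite /X exchange_big /=.
under eq_bigr => a _ do rewrite -mulr_sumr.
by rewrite sum_iota_ord; exact: Hloc.
Qed.

Theorem theorem3 (R : realFieldType) (G : tree R) (nA : player -> nat -> nat)
  (HG : well_formed G nA) (Hpr : perfect_recall G) (plus : bool) (T : nat) (p : player) :
  match p with
  | P1 =>
      exp_util G P1 (cfr_strat plus G nA T P1) (cfr_strat plus G nA T P2)
      <= exp_util G P1 (cfr_strat plus G nA T.+1 P1) (cfr_strat plus G nA T P2)
  | P2 =>
      exp_util G P2 (cfr_strat plus G nA T.+1 P1) (cfr_strat plus G nA T P2)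
      <= exp_util G P2 (cfr_strat plus G nA T.+1 P1) (cfr_strat plus G nA T.+1 P2)
  end.
Proof.
have Hnn : forall n (x : nat -> R) a, 0 <= sigma_rm n x a.
  move=> n x a; rewrite /sigma_rm; case: ifP => _.
    by apply: divr_ge0; [exact: pos_ge0 | apply: sumr_ge0 => *; exact: pos_ge0].
  by rewrite invr_ge0 ler0n.
case: p; rewrite !exp_util_EU.
- apply: (@improve_general _ G nA P1 (cfr_strat plus G nA T P1) (cfr_strat plus G nA T P2)
     (cfr_strat plus G nA T.+1 P1) (cfr_strat plus G nA T P2) HG Hpr).
  + by case.
  + by move=> J a; exact: Hnn.
  + move=> I.
    have := rm_improve plus (nA P1 I) (regrets plus G nA T P1 I)
      (cfv G P1 (cfr_strat plus G nA T P1) (cfr_strat plus G nA T P2) I).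
    exact.
- apply: (@improve_general _ G nA P2 (cfr_strat plus G nA T.+1 P1) (cfr_strat plus G nA T P2)
     (cfr_strat plus G nA T.+1 P1) (cfr_strat plus G nA T.+1 P2) HG Hpr).
  + by case.
  + by move=> J a; exact: Hnn.
  + move=> I.
    have := rm_improve plus (nA P2 I) (regrets plus G nA T P2 I)
      (cfv G P2 (cfr_strat plus G nA T.+1 P1) (cfr_strat plus G nA T P2) I).
    exact.
Qed.
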